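(* Let $M$ be a matroid on ground set $E=\{1,\dots,n\}$, let $x^*\in P_B(M)$, and let $F\subseteq P_B(M)$ be the unique face of $P_B(M)$ of minimal affine dimension containing $x^*$, with $\dim(F)=d$. Then there exists a basis $B$ of $M$ with $\chi(B)\in F$ and \[ \|\chi(B)-x^*\|_1\le d. \]
   Context: $\chi(S)\in\{0,1\}^n$ denotes the characteristic vector of $S\subseteq E$. $P_B(M)$ is the base polytope, the convex hull of the characteristic vectors of all bases of $M$. *)

(* Defs.v *)
From mathcomp Require Import all_boot all_order all_algebra.
Set Implicit Arguments. Unset Strict Implicit. Unset Printing Implicit Defensive.
Import Order.TTheory GRing.Theory Num.Theory.
Local Open Scope ring_scope.

(* Ground set E = {1,...,n} is represented by 'I_n = {0,...,n-1}. *)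

Definition is_matroid_bases (n : nat) (Bs : {set {set 'I_n}}) : Prop :=
  Bs != set0 /\
  forall B1 B2, B1 \in Bs -> B2 \in Bs ->
    forall x, x \in B1 :\: B2 ->
      exists2 y, y \in B2 :\: B1 & (B1 :\ x) :|: [set y] \in Bs.

Definition chi (R : realFieldType) (n : nat) (S : {set 'I_n}) : 'rV[R]_n :=
  \row_i (if i \in S then 1 else 0).

Definition base_polytope (R : realFieldType) (n : nat) (Bs : {set {set 'I_n}})
  (x : 'rV[R]_n) : Prop :=
  exists lam : {set 'I_n} -> R,
    (forall B, B \in Bs -> 0 <= lam B) /\
    \sum_(B in Bs) lam B = 1 /\
    x = \sum_(B in Bs) lam B *: chi R B.

Definition dotr (R : realFieldType) (n : nat) (c x : 'rV[R]_n) : R :=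
  \sum_i c 0 i * x 0 i.

Definition is_face (R : realFieldType) (n : nat) (P F : 'rV[R]_n -> Prop) : Prop :=
  exists (c : 'rV[R]_n) (delta : R),
    (forall x, P x -> dotr c x <= delta) /\
    (forall x, F x <-> (P x /\ dotr c x = delta)).

Definition aff_indep (R : realFieldType) (n k : nat) (p : 'I_k.+1 -> 'rV[R]_n) : bool :=
  \rank (\matrix_(i < k) (p (lift ord0 i) - p ord0)) == k.

Definition affdim (R : realFieldType) (n : nat) (S : 'rV[R]_n -> Prop) (d : nat) : Prop :=
  (exists p : 'I_d.+1 -> 'rV[R]_n, (forall i, S (p i)) /\ aff_indep p) /\
  (forall k (p : 'I_k.+1 -> 'rV[R]_n), (forall i, S (p i)) -> aff_indep p -> (k <= d)%N).

Definition norm1 (R : realFieldType) (n : nat) (v : 'rV[R]_n) : R :=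
  \sum_i `|v 0 i|.

(* Main.v *)
Require Import Defs.
From mathcomp Require Import all_boot all_order all_algebra.
From mathcomp Require Import ring lra.
Import Order.TTheory GRing.Theory Num.Theory.
Set Implicit Arguments. Unset Strict Implicit. Unset Printing Implicit Defensive.


Section Mat.
Variables (n : nat) (Bs : {set {set 'I_n}}) (hM : is_matroid_bases Bs).

Lemma exch B1 B2 x : B1 \in Bs -> B2 \in Bs -> x \in B1 -> x \notin B2 ->
  exists2 y, (y \in B2) && (y \notin B1) & (B1 :\ x) :|: [set y] \in Bs.
Proof.
move=> h1 h2 hx hx2; have [_ hE] := hM.
have := hE _ _ h1 h2 x; rewrite inE hx hx2 => /(_ isT) [y].
by rewrite inE andbC => ? ?; exists y.
Qed.

Lemma walk (K T : {set 'I_n}) (A : {set 'I_n} -> Prop) :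
  T \in Bs ->
  (forall B f g, B \in Bs -> K \subset B -> A B -> f \in B -> f \notin T ->
     f \notin K -> g \in T -> g \notin B -> (B :\ f :|: [set g]) \in Bs ->
     A (B :\ f :|: [set g])) ->
  forall B, B \in Bs -> K \subset B -> A B ->
  exists B', [/\ B' \in Bs, K \subset B', A B' & B' :\: T \subset K].
Proof.
move=> hT hpres B.
move: {2}#|B :\: T| (erefl #|B :\: T|) => m; elim/ltn_ind: m B => m IH B hm hB hK hA.
case: (boolP (B :\: T \subset K)) => [hs|/subsetPn [f]]; first by exists B.
rewrite inE => /andP [hfT hfB] hfK.
have [g /andP [gT gB] hB'] := exch hB hT hfB hfT.
have hK' : K \subset B :\ f :|: [set g].
  apply/subsetP => z hz; rewrite !inE (subsetP hK _ hz) andbT.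
  by case: eqP hz hfK => // ->  ->.
have := IH _ _ _ erefl hB' hK' (hpres _ _ _ hB hK hA hfB hfT hfK gT gB hB').
apply; rewrite -hm; apply: proper_card; apply/properP; split.
  apply/subsetP => z; rewrite !inE; case/andP => zT /orP [/andP [_ ->]|/eqP ezg].
    by rewrite zT.
  by rewrite ezg gT in zT.
exists f; rewrite !inE ?hfT ?hfB // eqxx /=.
by apply/eqP => efg; rewrite efg gT in hfT.
Qed.

Definition Zs (B2 : {set 'I_n}) x := [set z in B2 | (B2 :\ z :|: [set x]) \in Bs].

Lemma Zdep B2 x : B2 \in Bs -> x \notin B2 -> forall B, B \in Bs ->
  ~~ ([set x] :|: Zs B2 x \subset B).
Proof.
move=> h2 hx B hB; apply/negP => hs.
have [B' [hB' hK _ hd]] := @walk _ _ (fun _ => True) h2 (fun _ _ _ _ _ _ _ _ _ _ _ _ => I) _ hB hs I.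
have xB' : x \in B' by apply: (subsetP hK); rewrite !inE eqxx.
case: (boolP (B2 \subset B')) => [h2s|/subsetPn [f f2 fB']].
  have [y /andP [y2 yB'] _] := exch hB' h2 xB' hx.
  by rewrite (subsetP h2s _ y2) in yB'.
have [y /andP [yB' y2] hB''] := exch h2 hB' f2 fB'.
have : y \in B' :\: B2 by rewrite inE yB' y2.
move/(subsetP hd); rewrite !inE => /orP [/eqP ey|/andP [yy _]]; last by rewrite yy in y2.
subst y.
have : f \in Zs B2 x by rewrite inE f2 hB''.
by move=> fz; move: fB'; rewrite (subsetP hK) // inE fz orbT.
Qed.

Lemma sym_exch B1 B2 x : B1 \in Bs -> B2 \in Bs -> x \in B1 -> x \notin B2 ->
  exists y, [/\ y \in B2, y \notin B1, (B1 :\ x :|: [set y]) \in Bs &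
                 (B2 :\ y :|: [set x]) \in Bs].
Proof.
move=> h1 h2 x1 x2.
have hZ2 : Zs B2 x \subset B2 by apply/subsetP => z; rewrite inE => /andP [].
have hpres : forall B f g, B \in Bs -> Zs B2 x \subset B -> x \notin B -> f \in B -> f \notin B1 ->
     f \notin Zs B2 x -> g \in B1 -> g \notin B -> (B :\ f :|: [set g]) \in Bs ->
     x \notin (B :\ f :|: [set g]).
  move=> B f g hB hZ xB fB fB1 fZ g1 gB hB'.
  rewrite !inE negb_or (negbTE xB) andbF /=.
  apply/eqP => egx; subst g.
  have := Zdep h2 x2 hB'; move/negP; apply; apply/subsetP => z.
  move/setUP => [/set1P ->|zZ]; first by rewrite !inE eqxx orbT.
  rewrite !inE (subsetP hZ _ zZ) andbT; apply/orP; left; apply/eqP => ezf; subst z; by rewrite zZ in fZ.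
have [B' [hB' hK xB' hd]] := walk (A := fun B => x \notin B) h1 hpres h2 hZ2 x2.
have [y /andP [yB' y1] h1'] := exch h1 hB' x1 xB'.
have : y \in Zs B2 x by apply: (subsetP hd); rewrite inE y1 yB'.
rewrite inE => /andP [y2 h2']; by exists y.
Qed.
End Mat.

Local Open Scope ring_scope.

Lemma chiE (R : realFieldType) n (B : {set 'I_n}) i : chi R B 0 i = (i \in B)%:R.
Proof. by rewrite /chi mxE; case: (i \in B). Qed.

Lemma sum_ind (R : realFieldType) n (A : {set 'I_n}) :
  \sum_i ((i \in A)%:R : R) = #|A|%:R.
Proof. rewrite -sum1_card natr_sum [RHS]big_mkcond /=; apply: eq_bigr => i _; by case: (i \in A). Qed.

Lemma dotrD (R : realFieldType) n (c u v : 'rV[R]_n) : dotr c (u + v) = dotr c u + dotr c v.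
Proof. by rewrite /dotr -big_split; apply: eq_bigr => i _; rewrite mxE mulrDr. Qed.

Lemma dim_lb (R : realFieldType) n (F : 'rV[R]_n -> Prop) d (hd : affdim F d) k
  (B0 : {set 'I_n}) (Bf : 'I_k -> {set 'I_n}) (ef : 'I_k -> 'I_n) (s : R) :
  s != 0 -> F (chi R B0) -> (forall i, F (chi R (Bf i))) ->
  (forall i j, chi R (Bf i) 0 (ef j) - chi R B0 0 (ef j) = if i == j then s else 0) ->
  (k <= d)%N.
Proof.
move=> hs hF0 hFi hE.
pose p (j : 'I_k.+1) := if unlift ord0 j is Some i then chi R (Bf i) else chi R B0.
apply: (hd.2 k p).
  by move=> j; rewrite /p; case: unlift.
rewrite /aff_indep; set M := \matrix_(i < k) _.
have hN : M *m (\matrix_(c, j) ((c == ef j)%:R / s)) = 1%:M.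
  apply/matrixP => i j; rewrite !mxE (bigD1 (ef j)) //= big1 ?addr0; last first.
    by move=> c /negbTE hc; rewrite !mxE hc mul0r mulr0.
  rewrite !mxE eqxx mul1r /p liftK unlift_none.
  have := hE i j; rewrite !mxE => ->; case: eqP => _; last by rewrite mul0r.
  by rewrite divff.
have h1 := mxrankM_maxl M (\matrix_(c, j) ((c == ef j)%:R / s)).
rewrite hN mxrank1 in h1.
by rewrite eqn_leq rank_leq_row h1.
Qed.

Lemma chi_swap (R : realFieldType) n (B1 B2 : {set 'I_n}) x y :
  x \in B1 -> x \notin B2 -> y \in B2 -> y \notin B1 ->
  chi R (B1 :\ x :|: [set y]) + chi R (B2 :\ y :|: [set x]) = chi R B1 + chi R B2.
Proof.
move=> x1 x2 y2 y1; apply/matrixP => i j; rewrite !mxE !inE.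
have xy : x != y by apply/eqP => e; rewrite e y2 in x2.
case: (eqVneq j x) => [->|jx]; first by rewrite x1 (negbTE x2) (negbTE xy) /=; lra.
case: (eqVneq j y) => [->|jy]; first by rewrite y2 (negbTE y1) /=; lra.
by rewrite /= !orbF.
Qed.

Unset Implicit Arguments. Set Strict Implicit.

Theorem lemma5 (R : realFieldType) (n : nat) (Bs : {set {set 'I_n}})
  (hM : is_matroid_bases Bs)
  (xs : 'rV[R]_n) (hx : base_polytope Bs xs)
  (F : 'rV[R]_n -> Prop) (d : nat)
  (hF : is_face (base_polytope Bs) F) (hxF : F xs)
  (hmin : forall (G : 'rV[R]_n -> Prop) (dG : nat),
      is_face (base_polytope Bs) G -> G xs -> affdim G dG -> (d <= dG)%N)
  (hd : affdim F d) :
  exists B, B \in Bs /\ F (chi R B) /\ norm1 (chi R B - xs) <= d%:R.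
Proof.
move: hx => [lam [hl0 [hl1 hxs]]].
move: hF => [c [delta [hval hFiff]]].
have hdx : dotr c xs = delta by case/hFiff: hxF.
have chiP : forall B, B \in Bs -> base_polytope Bs (chi R B).
  move=> B hB; exists (fun B' => (B' == B)%:R); split.
    by move=> B' _; case: eqP.
  split.
    by rewrite (bigD1 B) //= eqxx big1 ?addr0 // => B' /andP [_ /negbTE ->].
  by rewrite (bigD1 B) //= eqxx scale1r big1 ?addr0 // => B' /andP [_ /negbTE ->]; rewrite scale0r.
have dotlin : dotr c xs = \sum_(B in Bs) lam B * dotr c (chi R B).
  rewrite hxs /dotr.
  under eq_bigr do rewrite summxE mulr_sumr.
  rewrite exchange_big /=; apply: eq_bigr => B _; rewrite mulr_sumr.
  by apply: eq_bigr => i _; rewrite mxE mulrCA.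
have supF : forall B, B \in Bs -> 0 < lam B -> dotr c (chi R B) = delta.
  have h0 : \sum_(B in Bs) lam B * (delta - dotr c (chi R B)) = 0.
    rewrite (eq_bigr (fun B => lam B * delta - lam B * dotr c (chi R B))); last by move=> B _; rewrite mulrBr.
    by rewrite sumrB -mulr_suml hl1 mul1r -dotlin hdx subrr.
  move=> B hB hlB.
  have := psumr_eq0P _ h0 hB.
  have ge0 : forall B, B \in Bs -> 0 <= lam B * (delta - dotr c (chi R B)).
    by move=> B' hB'; rewrite mulr_ge0 ?hl0 // subr_ge0; apply: hval; apply: chiP.
  move/(_ ge0)/eqP; rewrite mulf_eq0 (gt_eqF hlB) /= subr_eq0 => /eqP; done.
have inF : forall B, B \in Bs -> dotr c (chi R B) = delta -> F (chi R B).
  by move=> B hB hd'; apply/hFiff; split => //; apply: chiP.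
have pairF : forall B1 B2 B1' B2', B1 \in Bs -> B2 \in Bs -> B1' \in Bs -> B2' \in Bs ->
    dotr c (chi R B1) = delta -> dotr c (chi R B2) = delta ->
    chi R B1' + chi R B2' = chi R B1 + chi R B2 -> dotr c (chi R B1') = delta.
  move=> B1 B2 B1' B2' h1 h2 h1' h2' e1 e2 e.
  have := congr1 (dotr c) e; rewrite !dotrD e1 e2.
  have := hval _ (chiP _ h1'); have := hval _ (chiP _ h2'); lra.
have xe : forall i, xs 0 i = \sum_(B in Bs) lam B * (i \in B)%:R.
  by move=> i; rewrite hxs summxE; apply: eq_bigr => B _; rewrite mxE chiE.
have x0 : forall i, 0 <= xs 0 i.
  by move=> i; rewrite xe; apply: sumr_ge0 => B hB; rewrite mulr_ge0 ?hl0 ?ler0n.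
have x1 : forall i, xs 0 i <= 1.
  move=> i; rewrite xe -[X in _ <= X]hl1; apply: ler_sum => B hB.
  by rewrite ler_piMr ?hl0 //; case: (i \in B).
have [B0 /andP [hB0 hl0B0]] : exists B, (B \in Bs) && (0 < lam B).
  apply: psumr_neq0P; [exact: hl0 | rewrite hl1; apply/eqP; exact: oner_neq0].
have hdB0 : dotr c (chi R B0) = delta := supF _ hB0 hl0B0.
pose A1 := [set e | (e \in B0) && (xs 0 e < 1)].
pose P1 e y := [&& y \notin B0, B0 :\ e :|: [set y] \in Bs &
                   dotr c (chi R (B0 :\ e :|: [set y])) == delta].
have lb1 : (#|A1| <= d)%N.
  have ex1 : forall e, e \in A1 -> exists y, P1 e y.
    move=> e; rewrite inE => /andP [eB0 xlt].
    have [B /and3P [hB hlB eB]] : exists B, [&& B \in Bs, 0 < lam B & e \notin B].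
      case: (boolP [exists B, [&& B \in Bs, 0 < lam B & e \notin B]]) => [/existsP //|/existsPn hno].
      suff : xs 0 e = 1 by move=> e1; rewrite e1 ltxx in xlt.
      rewrite xe -[RHS]hl1; apply: eq_bigr => B hB.
      have := hno B; rewrite hB /= negb_and negbK => /orP [hle|->]; last by rewrite mulr1.
      have -> : lam B = 0 by apply/eqP; rewrite eq_le hl0 // andbT leNgt.
      by rewrite mul0r.
    have [y [yB yB0 h1 h2]] := sym_exch hM hB0 hB eB0 eB.
    exists y; rewrite /P1 yB0 h1 /=; apply/eqP.
    apply: (pairF B0 B _ (B :\ y :|: [set e])) => //; first exact: supF.
    exact: chi_swap.
  pose yf e := odflt e [pick y | P1 e y].
  have hyf : forall e, e \in A1 -> P1 e (yf e).
    move=> e he; rewrite /yf; case: pickP => //= hno.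
    by have [y hy] := ex1 e he; rewrite hno in hy.
  apply: (dim_lb hd (B0:=B0) (Bf := fun i => B0 :\ enum_val i :|: [set yf (enum_val i)])
                 (ef := enum_val) (s := -1)).
  - by rewrite oppr_eq0 oner_eq0.
  - exact: inF.
  - move=> i; have /and3P [_ h /eqP h'] := hyf _ (enum_valP i); exact: inF.
  - move=> i j; rewrite !chiE.
    have := enum_valP j; rewrite inE => /andP [ej _].
    have /and3P [yn _ _] := hyf _ (enum_valP i).
    have ny : enum_val j != yf (enum_val i).
      by apply/eqP => e; rewrite e in ej; rewrite ej in yn.
    rewrite !inE ej (negbTE ny) andbT orbF.
    have -> : (enum_val j != enum_val i) = (i != j) by rewrite (inj_eq enum_val_inj) eq_sym.
    by case: eqP => _ /=; lra.
pose A2 := [set e | (e \notin B0) && (0 < xs 0 e)].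
pose P2 e y := [&& y \in B0, B0 :\ y :|: [set e] \in Bs &
                   dotr c (chi R (B0 :\ y :|: [set e])) == delta].
have lb2 : (#|A2| <= d)%N.
  have ex2 : forall e, e \in A2 -> exists y, P2 e y.
    move=> e; rewrite inE => /andP [eB0 xgt].
    have [B /and3P [hB hlB eB]] : exists B, [&& B \in Bs, 0 < lam B & e \in B].
      case: (boolP [exists B, [&& B \in Bs, 0 < lam B & e \in B]]) => [/existsP //|/existsPn hno].
      suff : xs 0 e = 0 by move=> e1; rewrite e1 ltxx in xgt.
      rewrite xe; apply: big1 => B hB.
      have := hno B; rewrite hB /= negb_and => /orP [hle|/negbTE ->]; last by rewrite mulr0.
      have -> : lam B = 0 by apply/eqP; rewrite eq_le hl0 // andbT leNgt.
      by rewrite mul0r.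
    have [y [yB0 yB h1 h2]] := sym_exch hM hB hB0 eB eB0.
    exists y; rewrite /P2 yB0 h2 /=; apply/eqP.
    apply: (pairF B0 B _ (B :\ e :|: [set y])) => //; first exact: supF.
    exact: chi_swap.
  pose yf e := odflt e [pick y | P2 e y].
  have hyf : forall e, e \in A2 -> P2 e (yf e).
    move=> e he; rewrite /yf; case: pickP => //= hno.
    by have [y hy] := ex2 e he; rewrite hno in hy.
  apply: (dim_lb hd (B0:=B0) (Bf := fun i => B0 :\ yf (enum_val i) :|: [set enum_val i])
                 (ef := enum_val) (s := 1)).
  - by rewrite oner_eq0.
  - exact: inF.
  - move=> i; have /and3P [_ h /eqP h'] := hyf _ (enum_valP i); exact: inF.
  - move=> i j; rewrite !chiE.
    have := enum_valP j; rewrite inE => /andP [ej _].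
    rewrite !inE (negbTE ej) andbF /=.
    have -> : (enum_val j == enum_val i) = (i == j) by rewrite (inj_eq enum_val_inj) eq_sym.
    by case: eqP => _ /=; lra.
have hsub : forall (u v : 'rV[R]_n) i, (u - v) 0 i = u 0 i - v 0 i by move=> u v i; rewrite !mxE.
pose dist B := norm1 (chi R B - xs).
have e1 : \sum_(B in Bs) lam B * dist B = \sum_i 2 * xs 0 i * (1 - xs 0 i).
  rewrite /dist /norm1.
  under eq_bigr do rewrite mulr_sumr.
  rewrite exchange_big /=; apply: eq_bigr => i _.
  transitivity (\sum_(B in Bs) (lam B * (i \in B)%:R * (1 - 2 * xs 0 i) + lam B * xs 0 i)).
    apply: eq_bigr => B _; rewrite hsub chiE.
    have := x0 i; have := x1 i.
    case: (i \in B) => /= h1 h0.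
      rewrite ger0_norm ?subr_ge0 //; ring.
    rewrite sub0r normrN ger0_norm //; ring.
  by rewrite big_split /= -!mulr_suml -xe hl1; ring.
have hsum : \sum_(B in Bs) lam B * dist B <= d%:R.
  rewrite e1.
  apply: (@le_trans _ _ (\sum_i (((i \in A1)%:R + (i \in A2)%:R) / 2))).
    apply: ler_sum => i _.
    have g1 : 0 <= ((i \in A1)%:R : R) by rewrite ler0n.
    have g2 : 0 <= ((i \in A2)%:R : R) by rewrite ler0n.
    have [->|hn0] := eqVneq (xs 0 i) 0; first by lra.
    have [->|hn1] := eqVneq (xs 0 i) 1; first by lra.
    have xp : 0 < xs 0 i by rewrite lt_neqAle eq_sym hn0 x0.
    have xq : xs 0 i < 1 by rewrite lt_neqAle hn1 x1.
    have hsq := sqr_ge0 (2 * xs 0 i - 1).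
    have eq2 : 1 / 2 - 2 * xs 0 i * (1 - xs 0 i) = (2 * xs 0 i - 1) ^+ 2 / 2 by field.
    have hq : 2 * xs 0 i * (1 - xs 0 i) <= 1 / 2.
      rewrite -subr_ge0 eq2; apply: divr_ge0 => //; exact: ler0n.
    case: (boolP (i \in B0)) => hi.
      have -> : (i \in A1) = true by rewrite inE hi xq.
      rewrite /=; lra.
    have -> : (i \in A2) = true by rewrite inE hi xp.
    rewrite /=; lra.
  rewrite -mulr_suml big_split /= !sum_ind.
  move: lb1 lb2; rewrite -!(ler_nat R) => l1 l2; lra.
case: (boolP [exists B, [&& B \in Bs, 0 < lam B & dist B <= d%:R]]) => [/existsP [B /and3P [hB hlB hle]]|/existsPn hno].
  exists B; split => //; split => //; apply: inF => //; exact: supF.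
exfalso.
have pos : 0 < \sum_(B in Bs) lam B * (dist B - d%:R).
  rewrite (bigD1 B0) //=.
  have t0 : 0 < lam B0 * (dist B0 - d%:R).
    have := hno B0; rewrite hB0 hl0B0 /= -ltNge => h.
    by rewrite mulr_gt0 // subr_gt0.
  have t1 : 0 <= \sum_(B in Bs | B != B0) lam B * (dist B - d%:R).
    apply: sumr_ge0 => B /andP [hB _].
    have := hl0 _ hB; rewrite le_eqVlt => /orP [/eqP <-|hlB]; first by rewrite mul0r.
    have := hno B; rewrite hB hlB /= -ltNge => h.
    by rewrite mulr_ge0 // ?(ltW hlB) // subr_ge0 ltW.
  lra.
move: pos; rewrite (eq_bigr (fun B => lam B * dist B - lam B * d%:R)); last by move=> B _; rewrite mulrBr.
rewrite sumrB -mulr_suml hl1 mul1r; lra.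
Qed.
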